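(* Let $\lambda>0$ be a random variable with density $\pi(\lambda)$ on $(0,\infty)$, and let $\beta\mid\lambda\sim\mathcal{N}(0,\lambda)$ (variance $\lambda$), so that $\beta$ has marginal density $\pi(\beta)=\int_0^\infty \pi(\beta\mid\lambda)\pi(\lambda)\,d\lambda$. Then $\pi(\beta)$ is heavy-tailed if and only if $\pi(\lambda)$ is heavy-tailed.
   Context: A density $f$ (on $\mathbb{R}$, or on $(0,\infty)$ extended by zero) is heavy-tailed if $\int f(x)e^{tx}\,dx=\infty$ for all $t>0$. *)

(* Defs.v *)
From HB Require Import structures.
From mathcomp Require Import all_boot all_order all_algebra.
From mathcomp Require Import all_classical all_reals all_analysis.
Set Implicit Arguments. Unset Strict Implicit. Unset Printing Implicit Defensive.
Import Order.TTheory GRing.Theory Num.Theory.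
Local Open Scope classical_set_scope.
Local Open Scope ring_scope.
Local Open Scope ereal_scope.

Section defs.
Context {R : realType}.

Definition heavy_tailed (g : R -> \bar R) : Prop :=
  forall t : R, (0 < t)%R ->
    \int[lebesgue_measure]_(x in [set: R]) (g x * (expR (t * x))%:E) = +oo.

Definition ext_by_zero (f : R -> R) : R -> \bar R :=
  fun x => if (0 < x)%R then (f x)%:E else 0.

(* Marginal density of beta when lambda has density f on (0,oo) and
   beta | lambda ~ N(0, lambda) (variance lambda, i.e. std sqrt lambda):
   pi(beta) = int_0^oo pi(beta | lambda) pi(lambda) d lambda. *)
Definition marginal_density (f : R -> R) (b : R) : \bar R :=
  \int[lebesgue_measure]_(l in `]0%R, +oo[)
     (normal_pdf 0 (Num.sqrt l) b * f l)%:E.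

End defs.

(* Main.v *)
Require Import Defs.
From HB Require Import structures.
From mathcomp Require Import all_boot all_order all_algebra.
From mathcomp Require Import all_classical all_reals all_analysis.
From mathcomp Require Import ring lra measurable_realfun.
Import Order.TTheory GRing.Theory Num.Theory.
Import numFieldNormedType.Exports.
Local Open Scope classical_set_scope.
Local Open Scope ring_scope.

Section aux.
Context {R : realType}.
Let I : set R := `]0%R, +oo[.

Definition kk (l b : R) : R := normal_peak (Num.sqrt l) * normal_fun 0 (Num.sqrt l) b.

Lemma kk_ge0 l b : 0 <= kk l b.
Proof. by rewrite mulr_ge0 ?normal_peak_ge0 ?normal_fun_ge0. Qed.

Lemma kk_measurable : measurable_fun setT (fun p : R * R => kk p.1 p.2).
Proof.
have ms : measurable_fun setT (fun p : R * R => Num.sqrt p.1).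
  exact: measurableT_comp (measurable_realfun.continuous_measurable_fun (@sqrt_continuous R)) measurable_fst.
have -> : (fun p : R * R => kk p.1 p.2) =
  (fun p => (Num.sqrt (Num.sqrt p.1 ^+ 2 * pi *+ 2)) `^ (-1) *
     expR (- (p.2 - 0) ^+ 2 * ((Num.sqrt p.1 ^+ 2 *+ 2) `^ (-1)))).
  apply/funext => p; rewrite /kk /normal_peak /normal_fun.
  rewrite !powR_inv1 ?sqrtr_ge0 // mulrn_wge0 // sqr_ge0 //.
have msq := measurable_realfun.continuous_measurable_fun (@sqrt_continuous R).
have mpw := @measurable_powR R (-1).
have m1 : measurable_fun setT (fun p : R * R => Num.sqrt p.1 ^+ 2 * pi *+ 2).
  apply: (measurableT_comp (@natmul_measurable R setT 2)).
  by apply: measurable_funM => //; exact: measurable_funX.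
have m2 : measurable_fun setT (fun p : R * R => Num.sqrt (Num.sqrt p.1 ^+ 2 * pi *+ 2)).
  exact: (measurableT_comp msq m1).
have m3 : measurable_fun setT (fun p : R * R => Num.sqrt p.1 ^+ 2 *+ 2).
  apply: (measurableT_comp (@natmul_measurable R setT 2)).
  exact: measurable_funX.
have m4 : measurable_fun setT (fun p : R * R => - (p.2 - 0) ^+ 2).
  apply: measurable_funN; apply: measurable_funX; apply: measurable_funB => //.
have m5 : measurable_fun setT (fun p : R * R => - (p.2 - 0) ^+ 2 * ((Num.sqrt p.1 ^+ 2 *+ 2) `^ (-1))).
  apply: measurable_funM => //; exact: (measurableT_comp mpw m3).
apply: measurable_funM; first exact: (measurableT_comp mpw m2).
exact: (measurableT_comp (@measurable_expR R) m5).
Qed.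

Lemma kk_shift l b t : 0 < l ->
  kk l b * expR (t * b) = expR (t ^+ 2 / 2 * l) * normal_pdf (t * l) (Num.sqrt l) b.
Proof.
move=> l0; have s0 : Num.sqrt l != 0 by rewrite gt_eqF // sqrtr_gt0.
rewrite normal_pdfE //= /kk /normal_fun sqr_sqrtr ?ltW //.
rewrite -[LHS]mulrA [RHS]mulrCA; congr (_ * _); rewrite -!expRD; congr expR.
have ln0 : l != 0 by rewrite gt_eqF.
by field; rewrite ?ln0.
Qed.

End aux.

Theorem lemma1 (R : realType) (f : R -> R)
  (f_meas : measurable_fun (`]0%R, +oo[ : set R) f)
  (f_ge0 : forall l : R, 0 < l -> 0 <= f l)
  (f_int1 : (\int[lebesgue_measure]_(l in `]0%R, +oo[) (f l)%:E = 1)%E) :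
  heavy_tailed (marginal_density f) <-> heavy_tailed (ext_by_zero f).
Proof.
pose mu := @lebesgue_measure R.
pose g := fun x : R => if 0 < x then f x else 0.
have g_ge0 x : 0 <= g x by rewrite /g; case: ifPn => // /f_ge0.
have mg : measurable_fun setT g.
  rewrite /g; apply: measurable_fun_if => //.
  - apply: measurable_fun_ltr => //.
  - apply: measurable_funS f_meas => //.
    by move=> x [_ /=]; rewrite in_itv /= andbT.
have key s : (\int[mu]_(x in [set: R]) (ext_by_zero f x * (expR (s * x))%:E)
    = \int[mu]_x (g x * expR (s * x))%:E)%E.
  apply: eq_integral => x _; rewrite /ext_by_zero /g; case: ifP => _ //.
have marg t : (\int[mu]_(x in [set: R]) (marginal_density f x * (expR (t * x))%:E)
    = \int[mu]_x (g x * expR (t ^+ 2 / 2 * x))%:E)%E.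
  pose h := fun p : R * R => ((g p.1 * kk p.1 p.2) * expR (t * p.2))%:E.
  have mh : measurable_fun setT h.
    apply/measurable_EFinP; apply: measurable_funM.
      apply: measurable_funM; last exact: kk_measurable.
      exact: (measurableT_comp mg measurable_fst).
    apply: (measurableT_comp (@measurable_expR R)).
    by apply: measurable_funM => //; exact: measurable_snd.
  have h0 p : (0 <= h p)%E.
    by rewrite lee_fin mulr_ge0 ?expR_ge0 // mulr_ge0 // kk_ge0.
  have step1 b : (marginal_density f b * (expR (t * b))%:E = \int[mu]_l h (l, b))%E.
    rewrite /marginal_density integral_mkcond.
    have -> : (fun l => (normal_pdf 0 (Num.sqrt l) b * f l)%:E) \_ `]0%R, +oo[
        = (fun l => (g l * kk l b)%:E).
      apply/funext => l; rewrite patchE /g; case: ifPn => [/set_mem /=|/negP l0].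
        rewrite in_itv /= andbT => l0.
        by rewrite l0 normal_pdfE ?gt_eqF ?sqrtr_gt0 // mulrC.
      case: ifPn => [lp|_]; last by rewrite mul0r.
      by exfalso; apply: l0; apply/mem_set; rewrite /= in_itv /= andbT.
    rewrite -ge0_integralZr //.
      apply/measurable_EFinP; apply: measurable_funM => //.
      exact: (measurable_fun_pair1 b kk_measurable).
    by move=> l _; rewrite lee_fin mulr_ge0 // kk_ge0.
  have step3 l : (\int[mu]_b h (l, b) = (g l * expR (t ^+ 2 / 2 * l))%:E)%E.
    have [l0|l0] := ltP 0 l.
      transitivity (\int[mu]_b ((g l * expR (t ^+ 2 / 2 * l))%:E *
                      (normal_pdf (t * l) (Num.sqrt l) b)%:E))%E.
        by apply: eq_integral => b _; rewrite /h /= -mulrA kk_shift // mulrA EFinM.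
      rewrite ge0_integralZl //; last 3 first.
      - apply/measurable_EFinP; exact: measurable_normal_pdf.
      - by move=> b _; rewrite lee_fin normal_pdf_ge0.
      - by rewrite lee_fin mulr_ge0 ?expR_ge0.
      by rewrite integral_normal_pdf mule1.
    have gl : g l = 0 by rewrite /g ltNge l0.
    rewrite gl mul0r integral0_eq // => b _.
    by rewrite /h /= gl !mul0r.
  transitivity (\int[mu]_b \int[mu]_l h (l, b))%E.
    by apply: eq_integral => b _; exact: step1.
  rewrite -(@fubini_tonelli _ _ _ _ R mu mu h mh h0).
  by apply: eq_integral => l _; exact: step3.
split => H s s0.
- have t0 : 0 < Num.sqrt (s *+ 2) by rewrite sqrtr_gt0 mulrn_wgt0.
  have := H _ t0; rewrite marg sqr_sqrtr ?mulrn_wge0 ?ltW // key.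
  have -> : s *+ 2 / 2 = s.
    by lra.
  by [].
- rewrite marg -key; apply: H.
  by rewrite mulr_gt0 ?invr_gt0 ?exprn_gt0.
Qed.
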